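(* Every 4-regular graph with girth 5 has a strong edge-coloring using at most 22 colors.
   Context: A strong edge-coloring of a graph is a proper edge-coloring in which, in addition, no two edges of the same color lie on a common path of length three. The girth of a graph is the length of its shortest cycle (a loop counts as a cycle of length 1 and a pair of parallel edges as a cycle of length 2). *)

(* Defs.v *)
From mathcomp Require Import all_boot.
Set Implicit Arguments. Unset Strict Implicit. Unset Printing Implicit Defensive.

Definition simple_graph (T : finType) (e : rel T) : Prop :=
  symmetric e /\ irreflexive e.

Definition regular (T : finType) (e : rel T) (d : nat) : Prop :=
  forall v : T, #|[set w | e v w]| = d.

Definition is_graph_cycle (T : finType) (e : rel T) (s : seq T) : bool :=
  [&& 3 <= size s, uniq s & cycle e s].

Definition has_girth (T : finType) (e : rel T) (g : nat) : Prop :=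
  (exists s : seq T, is_graph_cycle e s /\ size s = g) /\
  (forall s : seq T, is_graph_cycle e s -> g <= size s).

(* An edge {u,v} is represented by the 2-set [set u; v]; a colouring with
   k colours assigns a colour in 'I_k to each such set. *)
Definition strong_edge_coloring (T : finType) (e : rel T) (k : nat)
    (c : {set T} -> 'I_k) : Prop :=
  (forall u v w : T, e u v -> e u w -> v != w ->
      c [set u; v] != c [set u; w]) /\
  (* no two edges of the same colour lie on a common path of length 3
     (for the end edges of a path u0 u1 u2 u3; the other pairs of edges
     on such a path are adjacent, covered by properness) *)
  (forall u0 u1 u2 u3 : T, e u0 u1 -> e u1 u2 -> e u2 u3 ->
      uniq [:: u0; u1; u2; u3] -> c [set u0; u1] != c [set u2; u3]).

(* Main.v *)
Require Import Defs.
From mathcomp Require Import all_boot.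
From mathcomp Require Import zify.
Set Implicit Arguments. Unset Strict Implicit. Unset Printing Implicit Defensive.

Section G.
Variables (T : finType) (e : rel T).
Hypothesis esym : symmetric e.
Hypothesis eirr : irreflexive e.
Hypothesis ereg : forall v, #|[set w | e v w]| = 4.
Hypothesis egirth : forall s : seq T, is_graph_cycle e s -> 5 <= size s.

Local Notation Nb v := [set w | e v w].
Implicit Types (f g : {set T}) (x y z w v p q : T).

Lemma neq_e x y : e x y -> x != y.
Proof. by move=> h; apply/eqP=> E; move: h; rewrite E eirr. Qed.

Lemma no_tri x y z : e x y -> e y z -> e z x -> False.
Proof.
move=> xy yz zx; have := @egirth [:: x; y; z].
have h1 := negbTE (neq_e xy); have h2 := negbTE (neq_e yz).
have h3 : (x == z) = false by rewrite eq_sym; exact: negbTE (neq_e zx).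
by rewrite /is_graph_cycle /= xy yz zx !inE h1 h2 h3 /=; move/(_ isT).
Qed.

Lemma no_sq x y z w : e x y -> e y z -> e z w -> e w x -> x != z -> y != w -> False.
Proof.
move=> xy yz zw wx xz yw; have := @egirth [:: x; y; z; w].
have h1 := negbTE (neq_e xy); have h2 := negbTE (neq_e yz).
have h3 := negbTE (neq_e zw); have h4 := negbTE xz; have h5 := negbTE yw.
have h6 : (x == w) = false by rewrite eq_sym; exact: negbTE (neq_e wx).
by rewrite /is_graph_cycle /= xy yz zw wx !inE h1 h2 h3 h4 h5 h6 /=; move/(_ isT).
Qed.

Lemma common_le1 x z : x != z -> #|Nb x :&: Nb z| <= 1.
Proof.
move=> xz; rewrite leqNgt; apply/negP => /card_gt1P [y [w [] ]].
rewrite !inE => /andP[xy zy] /andP[xw zw] yw.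
by apply: (no_sq xy _ zw _ xz yw); rewrite esym.
Qed.

Lemma pick_out (S F : {set T}) : #|F| < #|S| -> exists2 x, x \in S & x \notin F.
Proof.
move=> h; apply/subsetPn; apply/negP => sub.
by have := subset_leq_card sub; rewrite leqNgt h.
Qed.

Definition isedge (g : {set T}) := [exists x, exists y, e x y && (g == [set x; y])].
Definition conf (f g : {set T}) := (f != g) && [exists x in f, exists y in g, (x == y) || e x y].
Definition Nf f := [set g | isedge g && conf f g].
Definition star v := [set [set v; w] | w in Nb v].
Definition far x y := (x != y) && ~~ e x y.

Lemma set2C x y : [set x; y] = [set y; x].
Proof. by apply/setP => z; rewrite !inE orbC. Qed.

Lemma isedgeP g : reflect (exists x y, e x y /\ g = [set x; y]) (isedge g).
Proof.
apply: (iffP existsP) => [[x /existsP [y /andP [xy /eqP ->]]]|[x [y [xy ->]]]].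
  by exists x, y.
by exists x; apply/existsP; exists y; rewrite xy eqxx.
Qed.

Lemma isedge2 x y : e x y -> isedge [set x; y].
Proof. by move=> xy; apply/isedgeP; exists x, y. Qed.

Lemma conf_sym f g : conf f g = conf g f.
Proof.
rewrite /conf eq_sym; congr (_ && _).
apply/existsP/existsP => -[p /andP [pf /existsP [q /andP [qg h]]]];
  exists q; rewrite qg /=; apply/existsP; exists p; rewrite pf /=;
  by rewrite eq_sym esym.
Qed.

Lemma conf_irr f : conf f f = false.
Proof. by rewrite /conf eqxx. Qed.

Lemma confI f g x y : f != g -> x \in f -> y \in g -> (x == y) || e x y -> conf f g.
Proof.
move=> fg xf yg h; rewrite /conf fg /=; apply/existsP; exists x; rewrite xf /=.
by apply/existsP; exists y; rewrite yg.
Qed.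

Lemma confE f g : conf f g -> f != g /\ exists x y, [/\ x \in f, y \in g & (x == y) || e x y].
Proof.
case/andP => fg /existsP [x /andP [xf /existsP [y /andP [yg h]]]].
by split=> //; exists x, y.
Qed.

Lemma mem_star v g : g \in star v -> exists2 w, e v w & g = [set v; w].
Proof. by case/imsetP => w; rewrite inE => vw ->; exists w. Qed.

Lemma star2 v w : e v w -> [set v; w] \in star v.
Proof. by move=> vw; apply/imsetP; exists w; rewrite ?inE. Qed.

Lemma star_edge v g : g \in star v -> isedge g && (v \in g).
Proof. by case/mem_star => w vw ->; rewrite isedge2 // !inE eqxx. Qed.

Lemma edge_star v g : isedge g -> v \in g -> g \in star v.
Proof.
case/isedgeP => x [y [xy ->]]; rewrite !inE => /orP [] /eqP ->.
  exact: star2.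
by rewrite setUC; apply: star2; rewrite esym.
Qed.

Lemma card_star v : #|star v| = 4.
Proof.
rewrite card_in_imset ?ereg // => w w'; rewrite !inE => vw vw' E.
have : w \in [set v; w'] by rewrite -E !inE eqxx orbT.
by rewrite !inE eq_sym (negbTE (neq_e vw)) /= => /eqP.
Qed.

Lemma card_star1 v g : g \in star v -> #|star v :\ g| = 3.
Proof. by move=> h; have := cardsD1 g (star v); rewrite h card_star => -[]. Qed.

Definition U x y := \bigcup_(w in Nb x :\ y) (star w :\ [set x; w]).

Lemma card_bigcup3 (I : {set T}) (F : T -> {set {set T}}) :
  (forall w, w \in I -> #|F w| <= 3) -> #|\bigcup_(w in I) F w| <= #|I| * 3.
Proof.
move=> h; rewrite -sum_nat_const.
apply: (big_ind2 (fun (A : {set {set T}}) n => #|A| <= n)).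
- by rewrite cards0.
- move=> A1 n1 A2 n2 h1 h2; apply: leq_trans (leq_card_setU A1 A2) _.
  exact: leq_add.
- exact: h.
Qed.

Lemma card_U x y : e x y -> #|U x y| <= 9.
Proof.
move=> xy; apply: leq_trans (card_bigcup3 _) _.
  move=> w; rewrite !inE => /andP [_ xw]; rewrite card_star1 //.
  by rewrite setUC; apply: star2; rewrite esym.
by have := cardsD1 y (Nb x); rewrite ereg inE xy add1n => -[<-].
Qed.

Definition BigU x y := (star x :\ [set x; y]) :|: (star y :\ [set x; y]) :|: U x y :|: U y x.

Lemma part x y g q : e x y -> isedge g -> g != [set x; y] -> q \in g -> (q == x) || e x q ->
  g \in (star x :\ [set x; y]) :|: (star y :\ [set x; y]) :|: U x y.
Proof.
move=> xy eg gf qg /orP [/eqP qx|xq].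
  have gx : x \in g by rewrite -qx.
  by rewrite !inE gf (edge_star eg gx).
case: (eqVneq q y) => [qy|qy].
  have gy : y \in g by rewrite -qy.
  by rewrite !inE gf (edge_star eg gy) orbT.
case: (eqVneq g [set x; q]) => [gxq|gxq].
  have gx : x \in g by rewrite gxq !inE eqxx.
  by rewrite !inE gf (edge_star eg gx).
rewrite !inE; apply/orP; right; apply/bigcupP; exists q.
  by rewrite !inE qy.
by rewrite !inE gxq edge_star.
Qed.

Lemma card_Nf x y : e x y -> #|Nf [set x; y]| <= 24.
Proof.
move=> xy.
have sub : Nf [set x; y] \subset BigU x y.
  apply/subsetP => g; rewrite inE => /andP [eg] /confE [gf [p [q [pf qg h]]]].
  rewrite eq_sym in gf; rewrite eq_sym in h.
  move: pf; rewrite !inE => /orP [] /eqP pE; subst p.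
    by have := part xy eg gf qg h; rewrite /BigU !inE => H; apply/orP; left.
  have yx : e y x by rewrite esym.
  have gf' : g != [set y; x] by rewrite setUC.
  have := part yx eg gf' qg h; rewrite /BigU !inE setUC.
  by case/orP => [/orP [] H|H]; rewrite H ?orbT.
apply: leq_trans (subset_leq_card sub) _.
rewrite /BigU.
apply: leq_trans (leq_card_setU _ _) _.
apply: leq_trans (leq_add (leq_card_setU _ _) (card_U (_ : e y x))) _.
  by rewrite esym.
apply: leq_trans (leq_add (leq_add (leq_card_setU _ _) (card_U xy)) (leqnn _)) _.
rewrite card_star1 ?star2 //.
rewrite (set2C x y) card_star1 ?star2 //; by rewrite esym.
Qed.

Definition valid (c : {set T} -> 'I_22) (X : {set {set T}}) :=
  forall f g, f \in X -> g \in X -> conf f g -> c f != c g.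

Lemma greedy (X : {set {set T}}) (c0 : {set T} -> 'I_22) (rho : {set T} -> nat) :
  valid c0 X -> forall A : {set {set T}}, [disjoint X & A] ->
  (forall f, f \in A -> #|c0 @: [set g in X | conf f g]| +
       #|[set g in A | conf f g && (rho f <= rho g)]| < 22) ->
  exists c : {set T} -> 'I_22, valid c (X :|: A) /\ {in X, c =1 c0}.
Proof.
move=> vX A; move: {2}#|A| (leqnn #|A|) => n; elim: n A => [|n IH] A.
  rewrite leqn0 cards_eq0 => /eqP -> _ _; exists c0; split => //.
  by rewrite setU0.
move=> hA dXA hcount.
case: (set_0Vmem A) => [->|[f0 f0A]].
  by exists c0; split => //; rewrite setU0.
pose f := [arg min_(g < f0 in A) rho g].
have [fA fmin] : f \in A /\ forall g, g \in A -> rho f <= rho g.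
  by rewrite /f; case: arg_minnP => // g gA gmin; split.
have fX : f \notin X.
  by apply/negP => fX; move: dXA; rewrite disjoints_subset => /subsetP/(_ f fX); rewrite inE fA.
pose A' := A :\ f.
have hA' : #|A'| <= n.
  by move: hA; rewrite (cardsD1 f A) fA add1n ltnS.
have dXA' : [disjoint X & A'].
  by apply: disjointWr dXA; rewrite subsetDl.
have [c' [vc' c'X]] : exists c' : {set T} -> 'I_22, valid c' (X :|: A') /\ {in X, c' =1 c0}.
  apply: IH => // g; rewrite inE => /andP [_ gA].
  apply: leq_trans _ (hcount g gA); rewrite ltnS leq_add2l.
  by apply: subset_leq_card; apply/subsetP => g'; rewrite !inE => /andP [/andP [_ ->] ->].
pose Uc := c' @: [set g in X :|: A' | conf f g].
have cardUc : #|Uc| < 22.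
  apply: leq_trans (hcount f fA).
  rewrite ltnS /Uc.
  have -> : [set g in X :|: A' | conf f g] = [set g in X | conf f g] :|: [set g in A' | conf f g].
    by apply/setP => g; rewrite !inE andb_orl.
  rewrite imsetU; apply: leq_trans (leq_card_setU _ _) _; apply: leq_add.
    have -> : c' @: [set g in X | conf f g] = c0 @: [set g in X | conf f g].
      by apply: eq_in_imset => g; rewrite inE => /andP [gX _]; rewrite c'X.
    by [].
  apply: leq_trans (leq_imset_card _ _) _.
  apply: subset_leq_card; apply/subsetP => g; rewrite !inE => /andP [/andP [_ gA] cfg].
  by rewrite gA cfg fmin.
have [k _ kU] : exists2 k, k \in [set: 'I_22] & k \notin Uc.
  apply/subsetPn; apply/negP => sub.
  by have := subset_leq_card sub; rewrite cardsT card_ord leqNgt cardUc.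
exists (fun g => if g == f then k else c' g); split; last first.
  move=> g gX /=; case: eqP => [E|_]; last by rewrite c'X.
  by move: fX; rewrite -E gX.
have inXA' g : g \in X :|: A -> g != f -> g \in X :|: A'.
  by rewrite !inE => /orP [->|->] ->; rewrite ?orbT.
have kne g : g \in X :|: A -> conf f g -> k != c' g.
  move=> gXA cfg; have gf : g != f by apply/eqP => E; rewrite E conf_irr in cfg.
  apply/eqP => E; move/negP: kU; apply; rewrite E /Uc.
  by apply/imsetP; exists g; rewrite // inE inXA'.
move=> g1 g2 g1XA g2XA c12 /=.
case: (eqVneq g1 f) => [E1|n1]; case: (eqVneq g2 f) => [E2|n2].
- by rewrite E1 E2 conf_irr in c12.
- by subst g1; apply: kne.
- by subst g2; rewrite eq_sym; apply: kne; rewrite // conf_sym.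
- by apply: vc'; rewrite ?inXA'.
Qed.

Definition EV (V : {set T}) := [set g | isedge g && (g \subset V)].
Definition closedV (V : {set T}) := forall x y, e x y -> x \in V -> y \in V.

Lemma sub_edge V g x : closedV V -> isedge g -> x \in g -> (g \subset V) = (x \in V).
Proof.
move=> cV /isedgeP [u [v [uv ->]]] xg.
have vu : e v u by rewrite esym.
apply/idP/idP => [/subsetP /(_ x xg) //|xV].
apply/subsetP => y; move: xg xV; rewrite !inE => /orP [] /eqP -> xV /orP [] /eqP -> //.
  exact: cV uv xV.
exact: cV vu xV.
Qed.

Lemma conf_sub V f g : closedV V -> isedge f -> isedge g -> conf f g ->
  (f \subset V) = (g \subset V).
Proof.
move=> cV ef eg /confE [_ [p [q [pf qg /orP [/eqP pq|pq]]]]].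
  by rewrite (sub_edge cV ef pf) (sub_edge cV eg qg) pq.
rewrite (sub_edge cV ef pf) (sub_edge cV eg qg).
apply/idP/idP => h; first exact: cV pq h.
by apply: cV h; rewrite esym.
Qed.

Lemma all_closed (comp : forall r, exists c, valid c (EV [set x | connect e r x])) :
  forall n (W : {set T}), #|W| <= n -> closedV W -> exists c, valid c (EV W).
Proof.
elim=> [|n IH] W.
  rewrite leqn0 cards_eq0 => /eqP -> _; exists (fun _ => ord0) => f g.
  rewrite !inE => /andP [/isedgeP [x [y [xy ->]]]] /subsetP /(_ x).
  by rewrite !inE eqxx => /(_ isT).
move=> hW cW.
case: (set_0Vmem W) => [->|[r rW]].
  exists (fun _ => ord0) => f g.
  rewrite !inE => /andP [/isedgeP [x [y [xy ->]]]] /subsetP /(_ x).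
  by rewrite !inE eqxx => /(_ isT).
pose K := [set x | connect e r x].
have cK : closedV K.
  by move=> x y xy; rewrite !inE => rx; apply: connect_trans rx (connect1 xy).
have KW : K \subset W.
  apply/subsetP => x; rewrite inE => rx.
  have clW : closed e (mem W).
    by move=> u v uv; apply/idP/idP => h; [exact: cW uv h | apply: cW h; rewrite esym].
  by rewrite -(closed_connect clW rx).
pose W' := W :\: K.
have cW' : closedV W'.
  move=> x y xy; rewrite !inE => /andP [xK xW]; rewrite (cW x y xy xW) andbT.
  apply/negP => yK; move/negP: xK; apply; have := cK y x; rewrite !inE; apply => //.
  by rewrite esym.
have hW' : #|W'| <= n.
  have rWK : r \in W :&: K by rewrite !inE rW connect0.
  have : 0 < #|W :&: K| by apply/card_gt0P; exists r.
  rewrite /W' cardsD; move: hW; lia.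
have [c1 v1] := IH W' hW' cW'.
have [c2 v2] := comp r.
exists (fun g => if g \subset K then c2 g else c1 g) => f g.
rewrite !inE => /andP [ef fW] /andP [eg gW] cfg.
rewrite -(conf_sub cK ef eg cfg).
case: ifP => fK.
  by apply: v2; rewrite // !inE ?ef ?eg ?fK -?(conf_sub cK ef eg cfg).
have notK h : isedge h -> h \subset W -> ~~ (h \subset K) -> h \subset W'.
  move=> eh hW1 hK; apply/subsetP => x xh; rewrite inE (subsetP hW1 x xh) andbT.
  by rewrite -(sub_edge cK eh xh).
apply: v1; rewrite // !inE ?ef ?eg ?notK ?fK //.
by rewrite -(conf_sub cK ef eg cfg) fK.
Qed.

Lemma final (comp : forall r, exists c, valid c (EV [set x | connect e r x])) :
  exists c : {set T} -> 'I_22, strong_edge_coloring e c.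
Proof.
have [c vc] := all_closed comp (leqnn #|[set: T]|) (fun x y _ _ => in_setT y).
have inE2 x y : e x y -> [set x; y] \in EV [set: T] by move=> xy; rewrite inE isedge2 ?subsetT.
exists c; split.
  move=> u v w uv uw vw; apply: vc; rewrite ?inE2 //.
  apply: (@confI _ _ u u); rewrite ?inE ?eqxx //.
  apply/negP => /eqP E; have : w \in [set u; v] by rewrite E !inE eqxx orbT.
  by rewrite !inE eq_sym (negbTE (neq_e uw)) eq_sym (negbTE vw).
move=> u0 u1 u2 u3 h01 h12 h23 hu; apply: vc; rewrite ?inE2 //.
apply: (@confI _ _ u1 u2); rewrite ?inE ?eqxx ?orbT ?h12 //.
apply/negP => /eqP E; have : u0 \in [set u2; u3] by rewrite -E !inE eqxx.
move: hu; rewrite /= !inE => /andP [] /norP [_] /norP [h1 h2] _.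
by rewrite (negbTE h1) (negbTE h2).
by rewrite orbT.
Qed.

Lemma disjI (f g : {set T}) : (forall x, x \in f -> x \in g -> False) -> [disjoint f & g].
Proof. by move=> h; apply/pred0P => x /=; apply/negP => /andP [xf xg]; apply: (h x). Qed.

Lemma nonconf_disj f g : ~~ conf f g -> f != g -> [disjoint f & g].
Proof.
move=> nc fg; apply: disjI => x xf xg; move/negP: nc; apply.
by apply: (confI fg xf xg); rewrite eqxx.
Qed.

Lemma sib_nonconf z u u' v v' : e z u -> e z u' -> u != u' -> e u v -> v != z ->
  e u' v' -> v' != z -> ~~ e v v' -> ~~ conf [set u; v] [set u'; v'].
Proof.
move=> zu zu' uu' uv vz uv' vz' nvv; apply/negP => /confE [_ [x [y [xf yg h]]]].
have nuu : ~~ e u u' by apply/negP => H; apply: (no_tri zu H); rewrite esym.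
have uz : e u z by rewrite esym.
have u'z : e u' z by rewrite esym.
have vu : e v u by rewrite esym.
have v'u' : e v' u' by rewrite esym.
have nuv : ~~ e u v'.
  by apply/negP => H; apply: (no_sq H v'u' u'z zu uu' vz').
have nvu : ~~ e v u'.
  by apply/negP => H; apply: (no_sq H u'z zu uv vz); rewrite eq_sym.
have u_v' : u != v' by apply/eqP => E; subst v'; move/negP: nuu; apply; rewrite esym.
have v_u' : v != u' by apply/eqP => E; subst v; move/negP: nuu; apply.
have v_v' : v != v'.
  apply/eqP => E; subst v'.
  by apply: (no_sq vu uz zu' uv' vz uu').
move: xf yg h; rewrite !inE => /orP [] /eqP -> /orP [] /eqP ->.
- by rewrite (negbTE uu') (negbTE nuu).
- by rewrite (negbTE u_v') (negbTE nuv).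
- by rewrite (negbTE v_u') (negbTE nvu).
- by rewrite (negbTE v_v') (negbTE nvv).
Qed.

Lemma cross_disj r s a c b d : e r s -> e r a -> a != s -> e a c -> e s b -> b != r ->
  e b d -> c != d -> [disjoint [set a; c] & [set b; d]].
Proof.
move=> rs ra a_s ac sb br bd cd.
have ab : a != b by apply/eqP => E; subst b; apply: (no_tri rs sb); rewrite esym.
have bs : e b s by rewrite esym.
have sr : e s r by rewrite esym.
have nab : ~~ e a b by apply/negP => H; apply: (no_sq ra H bs sr _ a_s); rewrite eq_sym.
have ad : a != d by apply/eqP => E; subst d; move/negP: nab; apply; rewrite esym.
have cb : c != b by apply/eqP => E; subst c; move/negP: nab; apply.
apply: disjI => x; rewrite !inE => /orP [] /eqP E1 /orP [] /eqP E2.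
- by rewrite -E1 E2 eqxx in ab.
- by rewrite -E1 E2 eqxx in ad.
- by rewrite -E1 E2 eqxx in cb.
- by rewrite -E1 E2 eqxx in cd.
Qed.

Lemma cU (A B : {set T}) m n : #|A| <= m -> #|B| <= n -> #|A :|: B| <= m + n.
Proof. by move=> hA hB; apply: leq_trans (leq_card_setU A B) _; apply: leq_add. Qed.

Lemma c1le x : #|[set x]| <= 1.
Proof. by rewrite cards1. Qed.

Lemma sib_ne z u u' v v' : e z u -> e z u' -> u != u' -> e u v -> [set u; v] != [set u'; v'].
Proof.
move=> zu zu' uu' uv; apply/negP => /eqP E.
have : u \in [set u'; v'] by rewrite -E !inE eqxx.
rewrite !inE (negbTE uu') /= => /eqP E'; subst v'.
have : v \in [set u'; u] by rewrite -E !inE eqxx orbT.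
rewrite !inE => /orP [] /eqP E2; subst v.
  by apply: (no_tri zu uv); rewrite esym.
by rewrite eirr in uv.
Qed.

Lemma disj_ne f g : [disjoint f & g] -> isedge f -> f != g.
Proof.
move=> d /isedgeP [x [y [xy E]]]; apply/negP => /eqP fg; subst g.
move/pred0P: d => /(_ x) /=; by rewrite E !inE eqxx.
Qed.

Lemma card3 (U : finType) (A B C : U) : A != B -> A != C -> B != C -> #|[set A; B; C]| = 3.
Proof. by move=> hAB hAC hBC; rewrite -setUA cardsU1 cards2 hBC !inE negb_or hAB hAC. Qed.

Definition goodcfg r s (P0 P1 : {set {set T}}) : Prop :=
  [/\ (forall g, g \in P0 -> [/\ isedge g, r \notin g & exists2 x, x \in g & e r x]),
      (forall g, g \in P1 -> [/\ isedge g, r \notin g & exists2 x, x \in g & e s x]),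
      [/\ #|P0| = 3, #|P1| = 2 & [disjoint P0 & P1]],
      (forall f g, f \in P0 -> g \in P0 -> ~~ conf f g) /\
      (forall f g, f \in P1 -> g \in P1 -> ~~ conf f g)
    & (forall f g, f \in P0 :|: P1 -> g \in P0 :|: P1 -> f != g -> [disjoint f & g])].

Lemma config r s : e r s -> exists P0 P1, goodcfg r s P0 P1.
Proof.
move=> rs; have sr : e s r by rewrite esym.
have pk m v (F : {set T}) : #|F| <= m -> m <= 3 -> exists2 x, e v x & x \notin F.
  move=> hF1 hm; have hF : #|F| <= 3 by apply: leq_trans hF1 hm.
  have h4 : #|F| < #|Nb v| by rewrite ereg.
  have [x] := pick_out h4.
  by rewrite inE => vx xF; exists x.
have [b1 sb1] := pk _ s [set r] (c1le r) isT.
rewrite inE => b1r.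
have [b2 sb2] := pk _ s [set r; b1] (cU (c1le _) (c1le _)) isT.
rewrite !inE negb_or => /andP [b2r b2b1].
have [d1 b1d1] := pk _ b1 [set s] (c1le _) isT.
rewrite inE => d1s.
have d1b2 : d1 != b2.
  apply/eqP => E; subst d1; apply: (no_tri sb1 b1d1); rewrite esym //.
have [d2 b2d2] := pk _ b2 (s |: (Nb d1 :&: Nb b2)) (cU (c1le _) (common_le1 d1b2)) isT.
rewrite !inE b2d2 andbT negb_or => /andP [d2s nd12].
have d1r : d1 != r.
  by apply/eqP => E; rewrite E in b1d1; apply: (no_tri rs sb1 b1d1).
have d2r : d2 != r.
  by apply/eqP => E; rewrite E in b2d2; apply: (no_tri rs sb2 b2d2).
have [a3 ra3] := pk _ r ((s |: (Nb d1 :&: Nb r)) :|: (Nb d2 :&: Nb r))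
  (cU (cU (c1le _) (common_le1 d1r)) (common_le1 d2r)) isT.
rewrite !inE ra3 !andbT !negb_or => /andP [/andP [a3s nd1a3] nd2a3].
have [a2 ra2] := pk _ r ([set s; a3] :|: (Nb d1 :&: Nb r)) (cU (cU (c1le _) (c1le _)) (common_le1 d1r)) isT.
rewrite !inE ra2 !andbT !negb_or => /andP [/andP [a2s a2a3] nd1a2].
have [a1 ra1] := pk _ r [set s; a3; a2] (cU (cU (c1le _) (c1le _)) (c1le _)) isT.
rewrite !inE !negb_or => /andP [/andP [a1s a1a3] a1a2].
have [c1 a1c1] := pk _ a1 [set r; d1; d2] (cU (cU (c1le _) (c1le _)) (c1le _)) isT.
rewrite !inE !negb_or => /andP [/andP [c1r c1d1] c1d2].
have c1a2 : c1 != a2.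
  by apply/eqP => E; subst c1; apply: (no_tri ra1 a1c1); rewrite esym.
have c1a3 : c1 != a3.
  by apply/eqP => E; subst c1; apply: (no_tri ra1 a1c1); rewrite esym.
have [c2 a2c2] := pk _ a2 ([set r; d2] :|: (Nb c1 :&: Nb a2)) (cU (cU (c1le _) (c1le _)) (common_le1 c1a2)) isT.
rewrite !inE a2c2 !andbT !negb_or => /andP [/andP [c2r c2d2] nc12].
have c2a3 : c2 != a3.
  by apply/eqP => E; subst c2; apply: (no_tri ra2 a2c2); rewrite esym.
have [c3 a3c3] := pk _ a3 ((r |: (Nb c1 :&: Nb a3)) :|: (Nb c2 :&: Nb a3))
  (cU (cU (c1le _) (common_le1 c1a3)) (common_le1 c2a3)) isT.
rewrite !inE a3c3 !andbT !negb_or => /andP [/andP [c3r nc13] nc23].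
have c2d1 : c2 != d1.
  by apply/eqP => E; subst c2; move/negP: nd1a2; apply; rewrite esym.
have c3d1 : c3 != d1.
  by apply/eqP => E; subst c3; move/negP: nd1a3; apply; rewrite esym.
have c3d2 : c3 != d2.
  by apply/eqP => E; subst c3; move/negP: nd2a3; apply; rewrite esym.
have a12 : a1 != a2 by [].
have a13 : a1 != a3 by [].
have a23 : a2 != a3 by [].
have b12 : b1 != b2 by rewrite eq_sym.
have n12 := sib_nonconf ra1 ra2 a12 a1c1 c1r a2c2 c2r nc12.
have n13 := sib_nonconf ra1 ra3 a13 a1c1 c1r a3c3 c3r nc13.
have n23 := sib_nonconf ra2 ra3 a23 a2c2 c2r a3c3 c3r nc23.
have nb := sib_nonconf sb1 sb2 b12 b1d1 d1s b2d2 d2s nd12.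
have x11 := cross_disj rs ra1 a1s a1c1 sb1 b1r b1d1 c1d1.
have x12 := cross_disj rs ra1 a1s a1c1 sb2 b2r b2d2 c1d2.
have x21 := cross_disj rs ra2 a2s a2c2 sb1 b1r b1d1 c2d1.
have x22 := cross_disj rs ra2 a2s a2c2 sb2 b2r b2d2 c2d2.
have x31 := cross_disj rs ra3 a3s a3c3 sb1 b1r b1d1 c3d1.
have x32 := cross_disj rs ra3 a3s a3c3 sb2 b2r b2d2 c3d2.
have ne12 := sib_ne c2 ra1 ra2 a12 a1c1.
have ne13 := sib_ne c3 ra1 ra3 a13 a1c1.
have ne23 := sib_ne c3 ra2 ra3 a23 a2c2.
have neb := sib_ne d2 sb1 sb2 b12 b1d1.
have ar a : e r a -> r != a by move/neq_e.
have rc1 : r != c1 by rewrite eq_sym.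
have rc2 : r != c2 by rewrite eq_sym.
have rc3 : r != c3 by rewrite eq_sym.
have rb1 : r != b1 by rewrite eq_sym.
have rb2 : r != b2 by rewrite eq_sym.
have rd1 : r != d1 by rewrite eq_sym.
have rd2 : r != d2 by rewrite eq_sym.
have P0e a c : e r a -> e a c -> c != r ->
    [/\ isedge [set a; c], r \notin [set a; c] & exists2 x, x \in [set a; c] & e r x].
  move=> ra ac cr; split; first exact: isedge2.
    by rewrite !inE negb_or (neq_e ra) eq_sym cr.
  by exists a; rewrite ?inE ?eqxx.
have P1e b d : e s b -> e b d -> b != r -> d != r ->
    [/\ isedge [set b; d], r \notin [set b; d] & exists2 x, x \in [set b; d] & e s x].
  move=> sb bd br dr; split; first exact: isedge2.
    by rewrite !inE negb_or eq_sym br eq_sym dr.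
  by exists b; rewrite ?inE ?eqxx.
have y11 := disj_ne x11 (isedge2 a1c1).
have y12 := disj_ne x12 (isedge2 a1c1).
have y21 := disj_ne x21 (isedge2 a2c2).
have y22 := disj_ne x22 (isedge2 a2c2).
have y31 := disj_ne x31 (isedge2 a3c3).
have y32 := disj_ne x32 (isedge2 a3c3).
exists [set [set a1; c1]; [set a2; c2]; [set a3; c3]], [set [set b1; d1]; [set b2; d2]].
split.
- move=> g; rewrite !inE => /orP [/orP [] | ] /eqP ->; exact: P0e.
- move=> g; rewrite !inE => /orP [] /eqP ->; exact: P1e.
- split.
  + by rewrite card3.
  + by rewrite cards2 neb.
  + apply/pred0P => g /=; apply/negP; rewrite !inE => /andP [] /orP [/orP [] | ] /eqP -> /orP [] /eqP E.
    * by move/negP: y11; apply; rewrite E eqxx.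
    * by move/negP: y12; apply; rewrite E eqxx.
    * by move/negP: y21; apply; rewrite E eqxx.
    * by move/negP: y22; apply; rewrite E eqxx.
    * by move/negP: y31; apply; rewrite E eqxx.
    * by move/negP: y32; apply; rewrite E eqxx.
- split => f g; rewrite !inE.
    by move=> /orP [/orP [] | ] /eqP -> /orP [/orP [] | ] /eqP ->;
      first [ done | by rewrite conf_irr | by rewrite conf_sym ].
  by move=> /orP [] /eqP -> /orP [] /eqP ->;
      first [ done | by rewrite conf_irr | by rewrite conf_sym ].
- have d12 := nonconf_disj n12 ne12.
  have d13 := nonconf_disj n13 ne13.
  have d23 := nonconf_disj n23 ne23.
  have db := nonconf_disj nb neb.
  move=> f g; rewrite !inE.
  move=> /orP [/orP [/orP [] | ] | /orP []] /eqP -> /orP [/orP [/orP [] | ] | /orP []] /eqP -> fg;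
    first [ by move/negP: fg; rewrite eqxx | done | by rewrite disjoint_sym ].
Qed.

Fixpoint ball r s k : {set T} :=
  if k is k'.+1 then ball r s k' :|: [set y | [exists x in ball r s k', e x y]]
  else [set r; s].

Lemma ball_sub r s k : ball r s k \subset ball r s k.+1.
Proof. by rewrite /= subsetUl. Qed.

Lemma ball_mono r s k l : k <= l -> ball r s k \subset ball r s l.
Proof.
move/subnK => <-; elim: (l - k) => [|m IH] //.
by apply: subset_trans IH _; rewrite addSn ball_sub.
Qed.

Lemma ball_step r s k x y : x \in ball r s k -> e x y -> y \in ball r s k.+1.
Proof. by move=> xb xy; rewrite /= !inE; apply/orP; right; apply/existsP; exists x; rewrite xb. Qed.

Lemma ball_inv r s k y : y \in ball r s k.+1 -> y \in ball r s k \/ exists2 x, x \in ball r s k & e x y.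
Proof.
rewrite /= !inE => /orP [->|/existsP [x /andP [xb xy]]]; first by left.
by right; exists x.
Qed.

Lemma ball_path r s (p : seq T) v k : v \in ball r s k -> path e v p -> last v p \in ball r s (k + size p).
Proof.
elim: p v k => [|w p IH] v k /=; first by rewrite addn0.
move=> vb /andP [vw pw]; rewrite addnS -addSn; apply: IH => //.
exact: ball_step vb vw.
Qed.

Lemma count_main x y (D A Z : {set {set T}}) (c0 : {set T} -> 'I_22) (P : {set T} -> bool) sav :
  e x y -> (forall g, g \in D -> isedge g) -> (forall g, g \in A -> isedge g) -> [disjoint D & A] ->
  Z \subset Nf [set x; y] -> (forall g, g \in Z -> g \in D -> False) ->
  (forall g, g \in Z -> ~~ P g) ->
  #|c0 @: [set g in D | conf [set x; y] g]| + sav <= #|[set g in D | conf [set x; y] g]| ->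
  3 <= #|Z| + sav ->
  #|c0 @: [set g in D | conf [set x; y] g]| + #|[set g in A | conf [set x; y] g && P g]| < 22.
Proof.
move=> xy Dedge Aedge dDA ZN ZD ZP hsav h3.
set ND := [set g in D | conf _ g]; set NA := [set g in A | _].
have sub : ND :|: NA \subset Nf [set x; y] :\: Z.
  apply/subsetP => g; rewrite !inE => /orP [/andP [gD cg]|/andP [gA /andP [cg Pg]]].
    have gZ : g \notin Z by apply/negP => gZ; exact: (ZD g gZ gD).
    by rewrite gZ cg Dedge.
  have gZ : g \notin Z by apply/negP => gZ; move/negP: (ZP g gZ).
  by rewrite gZ cg Aedge.
have dis : [disjoint ND & NA].
  apply/pred0P => g /=; rewrite !inE; apply/negP => /andP [/andP [gD _] /andP [gA _]].
  by move/pred0P: dDA => /(_ g) /=; rewrite gD gA.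
have c1 := subset_leq_card sub.
rewrite cardsD (setIidPr ZN) in c1.
have c2 : #|ND :|: NA| = #|ND| + #|NA|.
  by rewrite cardsU; move: dis; rewrite -setI_eq0 => /eqP ->; rewrite cards0 subn0.
have c3 := card_Nf xy.
move: c1; rewrite c2 => c1.
have c4 := subset_leq_card ZN.
move: c1 c3 c4 hsav h3.
move: #|ND| #|NA| #|Z| #|c0 @: ND| #|Nf [set x; y]| => a b cc d n.
lia.
Qed.

Lemma arith1 a b c : a <= 1 + c -> c <= b - 3 -> 3 <= b -> a + 2 <= b.
Proof. lia. Qed.

Lemma arith2 (a b c d n : nat) : a <= c + d + 2 -> d <= c.+1 -> c < n -> n <= b -> a < n + b + 2.
Proof. lia. Qed.

Lemma component r : exists c, valid c (EV [set x | connect e r x]).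
Proof.
have [s rs] : exists s, e r s.
  have : 0 < #|Nb r| by rewrite ereg.
  by case/card_gt0P => s; rewrite inE => rs; exists s.
have sr : e s r by rewrite esym.
have [P0 [P1 [hP0 hP1 [cP0 cP1 dP01] [nc0 nc1] dis]]] := config rs.
pose K := [set x | connect e r x].
have cK : closedV K.
  by move=> x y xy; rewrite !inE => rx; apply: connect_trans rx (connect1 xy).
have rK : r \in K by rewrite inE connect0.
have sK : s \in K by rewrite inE connect1.
pose D := P0 :|: P1.
have Dedge g : g \in D -> isedge g.
  by rewrite inE => /orP [/hP0 [] | /hP1 []].
have rD g : g \in D -> r \notin g.
  by rewrite inE => /orP [/hP0 [] | /hP1 []].
have DK g : g \in D -> g \subset K.
  rewrite inE => /orP [/hP0 [eg _ [x xg rx]] | /hP1 [eg _ [x xg sx]]].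
    by rewrite (sub_edge cK eg xg); apply: cK rx rK.
  by rewrite (sub_edge cK eg xg); apply: cK sx sK.
have hex x : exists k, (x \in ball r s k) || (x \notin K).
  case xK: (x \in K); last by exists 0; rewrite orbT.
  move: xK; rewrite inE => /connectP [p pp ->]; exists (0 + size p).
  by rewrite (ball_path _ pp) // /= !inE eqxx.
pose h x := ex_minn (hex x).
have hmin x k : x \in ball r s k -> h x <= k.
  move=> xb; rewrite /h; case: ex_minnP => m _; apply; by rewrite xb.
have hP x : x \in K -> x \in ball r s (h x).
  move=> xK; rewrite /h; case: ex_minnP => m; by rewrite xK orbF.
have hlip x y : x \in K -> e x y -> h y <= (h x).+1.
  by move=> xK xy; apply: hmin; apply: ball_step (hP x xK) xy.
have hpar x : x \in K -> 0 < h x -> exists2 x', e x' x & h x' < h x.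
  move=> xK; have := hP x xK; case E: (h x) => [|k] // xb _.
  case: (ball_inv xb) => [xb'|[x' x'b x'x]].
    by have := hmin _ _ xb'; rewrite E ltnn.
  by exists x' => //; rewrite ltnS; apply: hmin.
have h0 x : x \in K -> h x = 0 -> (x == r) || (x == s).
  by move=> xK hx; have := hP x xK; rewrite hx /= !inE.
pose rho g := if g == [set r; s] then 0 else if r \in g then 1 else if s \in g then 2
              else (\sum_(x in g) h x).+2.
have sum2 u v : u != v -> \sum_(x in [set u; v]) h x = h u + h v.
  by move=> uv; rewrite big_setU1 ?big_set1 // inE.
have rho_le u v : u != v -> rho [set u; v] <= h u + h v + 2.
  move=> uv; rewrite /rho; case: ifP => // _; case: ifP => _; first by rewrite addn2.
  case: ifP => _; first by rewrite addn2.
  by rewrite sum2 // addn2.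
have rho_eq u v : r \notin [set u; v] -> s \notin [set u; v] -> u != v ->
    rho [set u; v] = h u + h v + 2.
  move=> ru su uv; rewrite /rho (negbTE ru) (negbTE su) sum2 // addn2.
  case: ifP => // /eqP E; move: ru; by rewrite E !inE eqxx.
pose c0 g := if g \in P0 then (ord0 : 'I_22) else ord_max.
have vD : valid c0 D.
  move=> f g; rewrite !inE /c0 => fD gD cfg.
  case: (boolP (f \in P0)) => fP0; case: (boolP (g \in P0)) => gP0 //.
    by move/negP: (nc0 f g fP0 gP0).
  move: fD gD; rewrite (negbTE fP0) (negbTE gP0) /= => fP1 gP1.
  by move/negP: (nc1 f g fP1 gP1).
pose A := EV K :\: D.
have dDA : [disjoint D & A].
  by apply/pred0P => g /=; rewrite in_setD; case: (g \in D).
have Aedge g : g \in A -> isedge g by rewrite in_setD => /andP [_]; rewrite inE => /andP [].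
have star_minus v : 3 <= #|star v :\: D|.
  rewrite cardsD card_star.
  suff : #|star v :&: D| <= 1 by case: #|_| => [|[]].
  apply/card_le1_eqP => g g'; rewrite !in_setI => /andP [gs gD] /andP [g's g'D].
  apply/eqP; apply/negP => /negP gg.
  have gg' : g != g' by rewrite eq_sym.
  have := dis g g' gD g'D gg'; move/pred0P => /(_ v) /=.
  by case/andP: (star_edge gs) => _ ->; case/andP: (star_edge g's) => _ ->.
have cond : forall f, f \in A -> #|c0 @: [set g in D | conf f g]| +
       #|[set g in A | conf f g && (rho f <= rho g)]| < 22.
  move=> f; rewrite in_setD => /andP [fnD]; rewrite inE => /andP [ef fK].
  case/isedgeP: ef => x [y [xy Ef]]; subst f.
  have xK : x \in K by apply: (subsetP fK); rewrite !inE eqxx.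
  have yK : y \in K by apply: (subsetP fK); rewrite !inE eqxx orbT.
  have c0P0 : forall X : {set {set T}}, P0 \subset X -> #|c0 @: X| + 2 <= #|X|.
    move=> X P0X.
    have sub : c0 @: X \subset ord0 |: (c0 @: (X :\: P0)).
      apply/subsetP => k /imsetP [g gX ->]; rewrite !inE /c0.
      case: (boolP (g \in P0)) => gP0; first by rewrite eqxx.
      apply/orP; right; apply/imsetP; exists g; first by rewrite in_setD gP0 gX.
      by rewrite (negbTE gP0).
    have H1 := leq_trans (subset_leq_card sub) (leq_card_setU _ _).
    rewrite cards1 in H1.
    have H2 := leq_imset_card c0 (X :\: P0); rewrite cardsD (setIidPr P0X) cP0 in H2.
    have H3 := subset_leq_card P0X; rewrite cP0 in H3.
    exact: arith1 H1 H2 H3.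
  case: (eqVneq [set x; y] [set r; s]) => [Ers|Nrs].
    rewrite Ers.
    apply: (count_main (Z := set0) (sav := 3) rs Dedge Aedge dDA).
    - exact: sub0set.
    - by move=> g; rewrite inE.
    - by move=> g; rewrite inE.
    - have -> : [set g in D | conf [set r; s] g] = D.
        apply/setP => g; rewrite inE; apply: andb_idr => gD.
        have gne : [set r; s] != g.
          by apply/eqP => E; move: (rD g gD); rewrite -E !inE eqxx.
        move: gD; rewrite inE => /orP [/hP0 [_ _ [z zg rz]] | /hP1 [_ _ [z zg sz]]].
          by apply: (@confI _ _ r z gne); rewrite ?inE ?eqxx ?rz ?orbT.
        by apply: (@confI _ _ s z gne); rewrite ?inE ?eqxx ?sz ?orbT.
      have c2 : #|c0 @: D| <= 2.
        have : c0 @: D \subset [set ord0; ord_max].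
          apply/subsetP => k /imsetP [g _ ->]; rewrite !inE /c0.
          by case: (g \in P0); rewrite eqxx ?orbT.
        move/subset_leq_card; rewrite cards2; case: (_ != _) => //.
        by move=> h1; apply: leq_trans h1 _.
      have cD : #|D| = 5.
        by rewrite cardsU cP0 cP1; move: dP01; rewrite -setI_eq0 => /eqP ->; rewrite cards0.
      by rewrite cD; apply: leq_trans (leq_add c2 (leqnn 3)) _.
    - by rewrite cards0.
  have rho_ge1 g : r \in g -> rho g <= 1.
    by move=> rg; rewrite /rho rg; case: ifP.
  case: (boolP (r \in [set x; y])) => rf.
    have rhof : rho [set x; y] = 1 by rewrite /rho (negbTE Nrs) rf.
    apply: (count_main (Z := [set [set r; s]]) (sav := 2) xy Dedge Aedge dDA).
    - apply/subsetP => g; rewrite inE => /eqP ->; rewrite inE isedge2 //=.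
      by apply: (@confI _ _ r r Nrs rf); rewrite ?inE ?eqxx.
    - move=> g; rewrite inE => /eqP -> /rD; by rewrite !inE eqxx.
    - by move=> g; rewrite inE => /eqP ->; rewrite rhof /rho eqxx.
    - apply: c0P0; apply/subsetP => g gP0; rewrite inE in_setU gP0 /=.
      have [_ rg [z zg rz]] := hP0 g gP0.
      have gne : [set x; y] != g by apply/eqP => E; move: rf; rewrite E (negbTE rg).
      by apply: (@confI _ _ r z gne); rewrite ?rz ?orbT.
    - by rewrite cards1.
  case: (boolP (s \in [set x; y])) => sf.
    have rhof : rho [set x; y] = 2 by rewrite /rho (negbTE Nrs) (negbTE rf) sf.
    apply: (count_main (Z := star r :\: D) (sav := 0) xy Dedge Aedge dDA).
    - apply/subsetP => g; rewrite in_setD => /andP [_ gs].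
      case/andP: (star_edge gs) => eg rg; rewrite inE eg /=.
      have gne : [set x; y] != g by apply/eqP => E; move: rf; rewrite E rg.
      by apply: (@confI _ _ s r gne); rewrite ?sr ?orbT.
    - by move=> g; rewrite in_setD => /andP [/negP].
    - move=> g; rewrite in_setD => /andP [_ gs]; case/andP: (star_edge gs) => _ rg.
      by rewrite rhof -ltnNge; apply: leq_ltn_trans (rho_ge1 g rg) _.
    - by rewrite addn0 leq_imset_card.
    - by rewrite addn0 star_minus.
  have [u [v [uv Euv huv uK vK]]] : exists u v,
      [/\ e u v, [set x; y] = [set u; v], h u <= h v, u \in K & v \in K].
    case: (leqP (h x) (h y)) => hxy; first by exists x, y.
    exists y, x; split => //; [by rewrite esym | exact: set2C | exact: ltnW].
  rewrite Euv in rf sf Nrs *.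
  have hu : 0 < h u.
    rewrite lt0n; apply/negP => /eqP hu0; case/orP: (h0 u uK hu0) => /eqP E.
      by move: rf; rewrite E !inE eqxx.
    by move: sf; rewrite E !inE eqxx.
  have [u' u'u hu'] := hpar u uK hu.
  have uu' : e u u' by rewrite esym.
  have u'K : u' \in K by apply: (cK u u').
  have rhof : rho [set u; v] = h u + h v + 2 by rewrite rho_eq // (neq_e uv).
  apply: (count_main (Z := star u' :\: D) (sav := 0) uv Dedge Aedge dDA).
  - apply/subsetP => g; rewrite in_setD => /andP [_ gs].
    case/andP: (star_edge gs) => eg u'g; rewrite inE eg /=.
    have u'f : u' \notin [set u; v].
      rewrite !inE negb_or (neq_e u'u) /=; apply/eqP => E.
      by move: hu'; rewrite E ltnNge huv.
    have gne : [set u; v] != g by apply/eqP => E; move: u'f; rewrite E u'g.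
    by apply: (@confI _ _ u u' gne); rewrite ?inE ?eqxx ?uu' ?orbT.
  - by move=> g; rewrite in_setD => /andP [/negP].
  - move=> g; rewrite in_setD => /andP [_] /mem_star [z u'z ->].
    rewrite rhof -ltnNge.
    have h1 := rho_le u' z (neq_e u'z).
    have h2 := hlip u' z u'K u'z.
    exact: arith2 h1 h2 hu' huv.
  - by rewrite addn0 leq_imset_card.
  - by rewrite addn0 star_minus.
have [c [vc _]] := greedy vD dDA cond.
exists c => f g fK gK cfg; apply: vc => //; rewrite in_setU.
  by case: (boolP (f \in D)) => //= fD; rewrite in_setD fD.
by case: (boolP (g \in D)) => //= gD; rewrite in_setD gD.
Qed.

End G.

Theorem lemma8 (T : finType) (e : rel T) :
  simple_graph e -> regular e 4 -> has_girth e 5 ->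
  exists c : {set T} -> 'I_22, strong_edge_coloring e c.
Proof.
move=> [esym eirr] ereg [_ eg].
have ereg' : forall v, #|[set w | e v w]| = 4 by exact: ereg.
have comp := component esym eirr ereg' eg.
by apply: final.
Qed.
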